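(* For every $n\ge 2$ and every proper ideal $\Delta\subset B_n$, the Bier sphere $\mathrm{Bier}(B_n,\Delta)$ is a shellable simplicial complex (of dimension $n-2$).
   Context: $B_n$ is the Boolean lattice of all subsets of $[1,n]=\{1,\dots,n\}$. A proper ideal $\Delta\subset B_n$ is a nonempty family of subsets of $[1,n]$ closed under taking subsets with $[1,n]\notin\Delta$ (an abstract simplicial complex with $\emptyset\in\Delta$). The Bier sphere $\mathrm{Bier}(B_n,\Delta)$ is the simplicial complex whose faces are the pairs $(B,C)$ with $B\subsetneq C\subseteq[1,n]$, $B\in\Delta$, $C\notin\Delta$, with $(B',C')$ a face of $(B,C)$ iff $B'\subseteq B$ and $C\subseteq C'$; concretely $(B,C)$ is the vertex set $B\sqcup\{\bar d: d\in[1,n]\setminus C\}$ on the vertex set $[1,n]\sqcup\{\bar1,\dots,\bar n\}$ (the deleted join of $\Delta$ with its Alexander dual). The face $(B,C)$ has $|B|+n-|C|$ vertices. Its facets are the pairs $(A;x):=(A,A\cup\{x\})$ with $A\in\Delta$, $x\notin A$, $A\cup\{x\}\notin\Delta$; each has $n-1$ vertices. A pure simplicial complex is shellable if its facets can be ordered $F_1,F_2,\dots$ so that for each $k\ge2$ the intersection of $F_k$ with $F_1\cup\dots\cup F_{k-1}$ (as subcomplexes) is pure of dimension $\dim F_k-1$. *)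

(* Defs.v *)
From mathcomp Require Import all_boot.
Set Implicit Arguments.
Unset Strict Implicit.
Unset Printing Implicit Defensive.

(* [1,n] is represented by 'I_n (0-indexed); the vertex set
   [1,n] ⊔ {bar 1,...,bar n} is 'I_n + 'I_n (inl d = d, inr d = bar d). *)

Definition proper_ideal (n : nat) (D : {set {set 'I_n}}) : Prop :=
  [/\ D != set0,
      (forall A B : {set 'I_n}, B \subset A -> A \in D -> B \in D)
    & [set: 'I_n] \notin D].

Definition bier_face (n : nat) (B C : {set 'I_n}) : {set 'I_n + 'I_n} :=
  (@inl 'I_n 'I_n) @: B :|: (@inr 'I_n 'I_n) @: (~: C).

Definition Bier (n : nat) (D : {set {set 'I_n}}) : {set {set 'I_n + 'I_n}} :=
  [set bier_face BC.1 BC.2 | BC in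
     [set BC : {set 'I_n} * {set 'I_n} |
        [&& BC.1 \proper BC.2, BC.1 \in D & BC.2 \notin D]]].

Definition facet (V : finType) (K : {set {set V}}) (F : {set V}) : Prop :=
  F \in K /\ (forall G, G \in K -> F \subset G -> G = F).

Definition pure_size (V : finType) (L : {set {set V}}) (s : nat) : Prop :=
  (forall G, G \in L -> exists2 H, H \in L & G \subset H /\ #|H| = s) /\
  (forall H, H \in L -> #|H| <= s).

Definition pure (V : finType) (K : {set {set V}}) : Prop :=
  exists s, forall F, facet K F -> #|F| = s.

Definition shell_inter (V : finType) (F : {set V}) (prev : seq {set V})
  : {set {set V}} :=
  [set G : {set V} | (G \subset F) && has (fun F' : {set V} => G \subset F') prev].

(* Shellability of a pure complex: an ordering F_1, F_2, ... of all facets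
   such that, for k >= 2, F_k ∩ (F_1 ∪ ... ∪ F_{k-1}) is pure of dimension
   dim F_k - 1 (i.e. its faces are contained in faces with #|F_k|-1 vertices). *)
Definition shellable (V : finType) (K : {set {set V}}) : Prop :=
  pure K /\
  exists2 s : seq {set V},
    uniq s /\ (forall F, F \in s <-> facet K F) &
    forall k, 0 < k < size s ->
      pure_size (shell_inter (nth set0 s k) (take k s))
                (#|nth set0 s k| - 1).

(* Main.v *)
Require Import Defs.
From mathcomp Require Import all_boot zify.
Set Implicit Arguments.
Unset Strict Implicit.
Unset Printing Implicit Defensive.

Section Generic.
Variable V : finType.
Implicit Types (t : seq {set V}) (F G H X Y : {set V}).

Definition shell_ok t : Prop :=
  forall F G, F \in t -> G \in t -> index G t < index F t ->
  exists v, [/\ v \in F, F :&: G \subset F :\ v &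
     exists H, [/\ H \in t, index H t < index F t & F :\ v \subset H]].

Lemma index_lt_size (T : eqType) (x : T) s : (x \in s) = (index x s < size s).
Proof. by rewrite index_mem. Qed.

Lemma shell_ok_cat t1 t2 : shell_ok t1 -> (forall F, F \in t2 -> F \notin t1) ->
  (forall F G, F \in t2 -> (G \in t1 \/ (G \in t2 /\ index G t2 < index F t2)) ->
     exists v, [/\ v \in F, F :&: G \subset F :\ v &
     exists H, (H \in t1 \/ (H \in t2 /\ index H t2 < index F t2)) /\ F :\ v \subset H]) ->
  shell_ok (t1 ++ t2).
Proof.
move=> ok1 disj cr F G; rewrite !mem_cat !index_cat.
case F1: (F \in t1) => /=.
  move=> _; case G1: (G \in t1) => /= GT lt.
    have [v [vF sub [H [H1 H2 H3]]]] := ok1 F G F1 G1 lt.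
    by exists v; split=> //; exists H; rewrite mem_cat index_cat H1 H2.
  move: lt; rewrite index_lt_size in F1; move=> lt; exfalso; have F1b : index F t1 < size t1 by rewrite F1. lia.
move=> F2 GT lt.
have hG : G \in t1 \/ (G \in t2 /\ index G t2 < index F t2).
  case G1: (G \in t1); first by left.
  right; rewrite G1 /= in GT lt; rewrite ltn_add2l in lt; split=> //.
have [v [vF sub [H [hH sH]]]] := cr F G F2 hG.
exists v; split=> //; exists H; rewrite mem_cat !index_cat; split=> //.
- by case: hH => [->|[-> _]] //; rewrite orbT.
- case: hH => [H1|[H2 lt2]]; rewrite ?H1.
    have H1b : index H t1 < size t1 by rewrite -index_lt_size. lia.
  case H1: (H \in t1).
    have H1b : index H t1 < size t1 by rewrite -index_lt_size. lia.
  by rewrite ltn_add2l.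
Qed.

Lemma index_map_setU1 w t X : (forall Y, Y \in t -> w \notin Y) -> w \notin X ->
  index (w |: X) (map (fun X : {set V} => w |: X) t) = index X t.
Proof.
move=> ht wX; elim: t ht => //= Y t IH ht.
rewrite IH; last by move=> Z Zt; apply: ht; rewrite inE Zt orbT.
have wY : w \notin Y by apply: ht; rewrite inE eqxx.
case: (eqVneq Y X) => [->|ne]; first by rewrite !eqxx.
case: eqP => // e; case/eqP: ne; apply/setP=> z.
have := congr1 (fun S : {set V} => z \in S) e; rewrite /= !inE.
case: (eqVneq z w) => [->|] //=; by rewrite (negPf wX) (negPf wY).
Qed.

Lemma setU1_inj_in w X Y : w \notin X -> w \notin Y -> w |: X = w |: Y -> X = Y.
Proof.
move=> wX wY e; apply/setP=> z.
have := congr1 (fun S : {set V} => z \in S) e; rewrite /= !inE.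
case: (eqVneq z w) => [->|] //=; by rewrite (negPf wX) (negPf wY).
Qed.

Lemma shell_ok_map w t : (forall Y, Y \in t -> w \notin Y) -> shell_ok t ->
  shell_ok (map (fun X : {set V} => w |: X) t).
Proof.
move=> ht ok F' G' /mapP[F Ft ->] /mapP[G Gt ->].
rewrite !index_map_setU1 ?ht // => lt.
have [v [vF sub [H [Ht Hlt sH]]]] := ok F G Ft Gt lt.
have vw : v != w by apply: contraNneq (ht F Ft) => <-.
exists v; split.
- by rewrite !inE vF orbT.
- apply/subsetP=> z; rewrite !inE; case: (eqVneq z w) => [->|] /=.
    by rewrite eq_sym vw.
  by move=> _ zFG; move/subsetP: sub => /(_ z); rewrite !inE => ->.
- exists (w |: H); split.
  + by apply: map_f.
  + by rewrite !index_map_setU1 ?ht.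
  + apply/subsetP=> z; rewrite !inE; case: (eqVneq z w) => [->|] //= _ zF.
    by move/subsetP: sH => /(_ z); rewrite !inE => ->.
Qed.

Lemma in_take_index t k X : X \in take k t -> index X t < k.
Proof.
move=> Xk; rewrite -(cat_take_drop k t) index_cat Xk.
have := geq_minl k (size t); rewrite -size_take_min.
rewrite index_lt_size in Xk; move=> h; exact: leq_trans Xk h.
Qed.

Lemma index_in_take t k X : X \in t -> index X t < k -> X \in take k t.
Proof.
move=> Xt lt; rewrite -(nth_index set0 Xt) -(nth_take set0 lt).
apply: mem_nth; rewrite size_take_min; rewrite index_lt_size in Xt.
rewrite leq_min lt Xt //.
Qed.

Lemma shell_ok_pure t c : uniq t -> (forall F, F \in t -> #|F| = c) -> shell_ok t ->
  forall k, k < size t ->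
  pure_size (shell_inter (nth set0 t k) (take k t)) (#|nth set0 t k| - 1).
Proof.
move=> ut ct ok k kt; set F := nth set0 t k.
have Ft : F \in t by apply: mem_nth.
have iF : index F t = k by rewrite /F index_uniq.
split.
  move=> G; rewrite inE => /andP[GF /hasP[F' F'k GF']].
  have F't : F' \in t by apply: mem_take F'k.
  have lt0 : index F' t < index F t by rewrite iF in_take_index.
  have [v [vF sub [H [Ht Hlt sH]]]] := ok F F' Ft F't lt0.
  exists (F :\ v); last split.
  - rewrite inE subsetDl /=; apply/hasP; exists H => //.
    by apply: index_in_take => //; rewrite -iF.
  - by apply: subset_trans sub; rewrite subsetI GF.
  - by rewrite (cardsD1 v F) vF /= subn1.
move=> H; rewrite inE => /andP[HF /hasP[F' F'k HF']].
have F't : F' \in t by apply: mem_take F'k.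
have neq : F' != F.
  apply/eqP=> e; have := in_take_index F'k; rewrite e iF ltnn //.
case: (ltnP #|H| #|F|) => [lt|le]; first by lia.
have eHF : H = F by apply/eqP; rewrite eqEcard HF le.
have : F == F' by rewrite eqEcard (ct F Ft) (ct F' F't) leqnn andbT -eHF.
by rewrite eq_sym (negPf neq).
Qed.

End Generic.

Section Bier.
Variable n : nat.
Notation I := 'I_n.
Implicit Types (S A B C : {set I}) (D : {set {set I}}) (p : {set I} * I).

Lemma inr_eq (a b : I) : (@inr I I a == inr b) = (a == b). Proof. by []. Qed.
Lemma inl_eq (a b : I) : (@inl I I a == inl b) = (a == b). Proof. by []. Qed.
Lemma inlr_eq (a b : I) : (@inl I I a == inr b) = false. Proof. by []. Qed.
Lemma inrl_eq (a b : I) : (@inr I I a == inl b) = false. Proof. by []. Qed.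

Definition fv S p : {set I + I} := inl @: p.1 :|: inr @: (S :\: (p.2 |: p.1)).
Definition valid S D p : bool :=
  [&& p.1 \subset S, p.2 \in S, p.2 \notin p.1, p.1 \in D & (p.2 |: p.1) \notin D].
Definition dc D := forall A B, B \subset A -> A \in D -> B \in D.

Lemma fv_inl S p a : (inl a \in fv S p) = (a \in p.1).
Proof.
rewrite !inE; apply/orP/idP => [[/imsetP[b bA [->]] // | /imsetP[b _ //]] | aA].
by left; apply: imset_f.
Qed.

Lemma fv_inr S p d : (inr d \in fv S p) = (d \in S) && (d \notin p.2 |: p.1).
Proof.
rewrite !inE; apply/orP/idP => [[/imsetP[b _ //] | /imsetP[b bA [->]]] | dA].
  by move: bA; rewrite !inE andbC.
by right; apply: imset_f; rewrite !inE andbC.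
Qed.

Lemma fv_inj2 S e : injective (fun A => fv S (A, e)).
Proof.
move=> A B h; apply/setP=> a; have := congr1 (fun X : {set I + I} => inl a \in X) h.
by rewrite /= !fv_inl.
Qed.

Lemma fv_g S D e p : e \in S -> valid (S :\ e) [set A | e |: A \in D] p ->
  fv S (e |: p.1, p.2) = inl e |: fv (S :\ e) p.
Proof.
case: p => A x eS /and5P[/= AS xS xA AD xAD].
apply/setP=> [[a|d]]; rewrite in_setU1 ?fv_inl ?fv_inr /=.
  by rewrite in_setU1.
rewrite !inE; by case: (d == e); rewrite /= ?orbT ?andbF ?orbF ?andbT.
Qed.

Lemma fv_3 S D e p : e \in S -> valid (S :\ e) D p ->
  fv S p = inr e |: fv (S :\ e) p.
Proof.
case: p => A x eS /and5P[/= AS xS xA AD xAD].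
apply/setP=> [[a|d]]; rewrite in_setU1 ?fv_inl ?fv_inr //=.
rewrite !inE inr_eq; case: (eqVneq d e) => [->|de] /=; last by [].
rewrite eS /=; move: xS; rewrite !inE => /andP[xe _].
have eA : e \notin A by apply/negP=> /(subsetP AS); rewrite !inE eqxx.
by rewrite eq_sym (negbTE xe) (negbTE eA).
Qed.


Definition D1 D e := [set A : {set I} | e |: A \in D].
Definition L2 S D e := sort (fun A B : {set I} => #|A| <= #|B|)
  (enum [set A : {set I} | [&& A \subset S :\ e, A \in D & e |: A \notin D]]).

Lemma L2mem S D e A : (A \in L2 S D e) = [&& A \subset S :\ e, A \in D & e |: A \notin D].
Proof. by rewrite mem_sort mem_enum inE. Qed.

Lemma L2uniq S D e : uniq (L2 S D e).
Proof. by rewrite sort_uniq enum_uniq. Qed.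

Lemma L2card S D e A B : A \in L2 S D e -> B \in L2 S D e ->
  index A (L2 S D e) <= index B (L2 S D e) -> #|A| <= #|B|.
Proof.
move=> AL BL le.
have tr : transitive (fun A B : {set I} => #|A| <= #|B|).
  by move=> y x z; apply: leq_trans.
have so := sort_sorted (fun A B : {set I} => leq_total #|A| #|B|)
  (enum [set A : {set I} | [&& A \subset S :\ e, A \in D & e |: A \notin D]]).
have := sorted_leq_nth tr (fun A => leqnn #|A|) set0 so.
rewrite -/(L2 S D e) => /(_ (index A (L2 S D e)) (index B (L2 S D e))).
by rewrite !nth_index //; apply=> //; rewrite unfold_in /= index_mem.
Qed.

Lemma L2idx S D e A B : A \in L2 S D e -> B \in L2 S D e ->
  #|B| < #|A| -> index B (L2 S D e) < index A (L2 S D e).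
Proof.
move=> AL BL lt; rewrite ltnNge; apply/negP=> le.
by have := L2card AL BL le; rewrite leqNgt lt.
Qed.

Lemma dcU D e : dc D -> dc (D1 D e).
Proof.
move=> dD A B BA; rewrite !inE; apply: dD; exact: setUS.
Qed.


Lemma step_mem S D e s1 s0 p : dc D -> e \in S ->
  (forall p, (p \in s1) = valid (S :\ e) (D1 D e) p) ->
  (forall p, (p \in s0) = valid (S :\ e) D p) ->
  (p \in map (fun q => (e |: q.1, q.2)) s1 ++ map (fun A => (A, e)) (L2 S D e) ++ s0)
    = valid S D p.
Proof.
move=> dD eS m1 m0; rewrite !mem_cat; apply/idP/idP.
- case/or3P => [/mapP[[B x] qs ->] | /mapP[A AL ->] | ps].
  + move: qs; rewrite m1 => /and5P[/= BS xS xB BD xBD].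
    move: xS BD xBD; rewrite !inE => /andP[xe xS] BD xBD.
    apply/and5P; split => //=.
    * rewrite subUset sub1set eS /=; apply: subset_trans BS _; exact: subD1set.
    * by rewrite !inE negb_or xe xB.
    * by rewrite setUCA.
  + move: AL; rewrite L2mem => /and3P[AS AD eAD].
    have eA : e \notin A by apply/negP=> /(subsetP AS); rewrite !inE eqxx.
    apply/and5P; split => //=.
    by apply: subset_trans AS _; exact: subD1set.
  + move: ps; rewrite m0 => /and5P[/= AS xS xA AD xAD].
    apply/and5P; split => //=.
    * by apply: subset_trans AS _; exact: subD1set.
    * by move: xS; rewrite !inE => /andP[].
case: p => A x /and5P[/= AS xS xA AD xAD].
case eA: (e \in A).
  apply/or3P; apply: Or31; apply/mapP; exists (A :\ e, x).
    rewrite m1; apply/and5P; split => /=.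
    - by apply: setSD.
    - rewrite !inE xS andbT; apply: contraNneq xA => ->; exact: eA.
    - by rewrite !inE negb_and negbK xA orbT.
    - by rewrite inE setD1K.
    - by rewrite inE setUCA setD1K.
  by rewrite /= setD1K.
case: (eqVneq x e) => [xe|xe].
  apply/or3P; apply: Or32; apply/mapP; exists A => //; last by rewrite xe.
  rewrite xe in xA xAD; rewrite L2mem; apply/and3P; split => //; apply/subsetP=> z zA.
  rewrite !inE (subsetP AS) // andbT.
  by apply: contraNneq xA => <-.
apply/or3P; apply: Or33; rewrite m0; apply/and5P; split => //=.
- apply/subsetP=> z zA; rewrite !inE (subsetP AS) // andbT.
  by apply: contraTneq zA => ->; rewrite eA.
- by rewrite !inE xe.
Qed.


Ltac fvsimp := rewrite ?in_setD1 ?in_setU1 ?in_setI ?inl_eq ?inr_eq ?inlr_eq ?inrl_eq ?fv_inl ?fv_inr /=.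

Lemma step_shell S D e s1 s0 : dc D -> e \in S ->
  (forall p, (p \in s1) = valid (S :\ e) (D1 D e) p) ->
  uniq (map (fv (S :\ e)) s1) -> shell_ok (map (fv (S :\ e)) s1) ->
  (forall p, (p \in s0) = valid (S :\ e) D p) ->
  uniq (map (fv (S :\ e)) s0) -> shell_ok (map (fv (S :\ e)) s0) ->
  let t := (map (fv S) (map (fun q => (e |: q.1, q.2)) s1 ++ map (fun A => (A, e)) (L2 S D e) ++ s0)) in
  uniq t /\ shell_ok t.
Proof.
move=> dD eS m1 u1 o1 m0 u0 o0 t.
set S' := S :\ e.
set T1 := map (fun X => inl e |: X) (map (fv S') s1).
set T2 := map (fun A => fv S (A, e)) (L2 S D e).
set T3 := map (fun X => inr e |: X) (map (fv S') s0).
have E : map (fv S) (map (fun q => (e |: q.1, q.2)) s1 ++ map (fun A => (A, e)) (L2 S D e) ++ s0)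
    = (T1 ++ T2) ++ T3.
  rewrite !map_cat catA; congr ((_ ++ _) ++ _).
  - rewrite /T1 -!map_comp; apply/eq_in_map => q qs /=.
    by rewrite (fv_g (D := D)) // -m1.
  - by rewrite /T2 -map_comp.
  - rewrite /T3 -!map_comp; apply/eq_in_map => q qs /=.
    by rewrite (fv_3 (D := D) eS) // -m0.
rewrite /t E.
have eS' : e \notin S' by rewrite !inE eqxx.
have T1P : forall F, F \in T1 -> exists2 q, valid S' (D1 D e) q & F = inl e |: fv S' q.
  move=> F /mapP[X /mapP[q qs ->] ->]; exists q => //; by rewrite -m1.
have T3P : forall F, F \in T3 -> exists2 q, valid S' D q & F = inr e |: fv S' q.
  move=> F /mapP[X /mapP[q qs ->] ->]; exists q => //; by rewrite -m0.
have T2P : forall F, F \in T2 -> exists2 A, A \in L2 S D e & F = fv S (A, e).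
  by move=> F /mapP[A AL ->]; exists A.
have vS' : forall D' q, valid S' D' q -> e \notin q.1.
  move=> D' q /and5P[qS _ _ _ _]; apply/negP=> /(subsetP qS); by rewrite (negPf eS').
have L2e : forall A, A \in L2 S D e -> e \notin A.
  move=> A; rewrite L2mem => /and3P[AS _ _]; apply/negP=> /(subsetP AS); by rewrite (negPf eS').
have iT2 : forall A, index (fv S (A, e)) T2 = index A (L2 S D e).
  by move=> A; rewrite /T2 (index_map (@fv_inj2 S e)).
have IIstep : forall A a, A \in L2 S D e -> a \in A ->
    exists H, (H \in T1 \/ (H \in T2 /\ index H T2 < index (fv S (A, e)) T2))
              /\ fv S (A, e) :\ inl a \subset H.
  move=> A a AL aA; have eA := L2e A AL.
  move: (AL); rewrite L2mem => /and3P[AS AD eAD].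
  have aS' : a \in S' by apply: (subsetP AS).
  case eaD : (e |: (A :\ a) \in D).
    exists (fv S (e |: (A :\ a), a)); split.
      left; apply/mapP; exists (fv S' (A :\ a, a)).
        apply: map_f; rewrite m1; apply/and5P; split => //=.
        - by apply: subset_trans AS; apply: subD1set.
        - by rewrite !inE eqxx.
        - by rewrite inE.
        - by rewrite inE setD1K.
      by rewrite -(fv_g (D := D)) //; apply/and5P; split => //=;
        rewrite ?inE ?eqxx ?setD1K //; apply: subset_trans AS; apply: subD1set.
    apply/subsetP => [[z|z]]; fvsimp.
      by rewrite !inE => /andP[-> ->]; rewrite orbT.
    rewrite !inE => /andP[zS]; rewrite zS /=.
    by case: (eqVneq z a) => [->|_]; rewrite ?aA ?orbT //=.
  have AaL : A :\ a \in L2 S D e.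
    rewrite L2mem eaD andbT; apply/andP; split.
      by apply: subset_trans AS; apply: subD1set.
    by apply: dD AD; apply: subD1set.
  exists (fv S (A :\ a, e)); split.
    right; split; first by apply: map_f.
    rewrite !iT2; apply: L2idx => //.
    by rewrite (cardsD1 a A) aA.
  apply/subsetP => [[z|z]]; fvsimp.
    by rewrite !inE => /andP[-> ->].
  rewrite !inE => /andP[zS]; rewrite zS /=.
  by case: (z == a); case: (z == e); case: (z \in A).
have notG : forall (F G : {set I + I}) v, v \in F -> v \notin G -> F :&: G \subset F :\ v.
  move=> F G v _ vG; apply/subsetP=> z; rewrite !inE => /andP[zF zG].
  by rewrite zF andbT; apply: contraNneq vG => <-.
have noreT12 : forall G, G \in T1 ++ T2 -> inr e \notin G.
  move=> G; rewrite mem_cat => /orP[/T1P[q vq ->] | /T2P[A AL ->]]; fvsimp.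
    by rewrite (negPf eS').
  by rewrite in_setU1 eqxx /= andbF.
have oT3 : shell_ok T3.
  apply: shell_ok_map => //; move=> Y /mapP[q qs ->]; fvsimp; by rewrite (negPf eS').
have nT1 : forall Y, Y \in map (fv S') s1 -> inl e \notin Y.
  move=> Y /mapP[q qs ->]; rewrite fv_inl; apply: (vS' (D1 D e)); rewrite -m1; exact: qs.
have nT3 : forall Y, Y \in map (fv S') s0 -> inr e \notin Y.
  move=> Y /mapP[q qs ->]; fvsimp; by rewrite (negPf eS').
have dis12 : forall F, F \in T2 -> F \notin T1.
  move=> F /T2P[A AL ->]; apply/negP => /T1P[q _ eq].
  have := congr1 (fun X : {set I + I} => inl e \in X) eq.
  by rewrite /= fv_inl in_setU1 eqxx (negPf (L2e A AL)).
have dis3 : forall F, F \in T3 -> F \notin T1 ++ T2.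
  move=> F /T3P[q vq ->]; apply/negP => /noreT12; fvsimp; by rewrite eqxx.
split.
  rewrite !cat_uniq; apply/and3P; split; first (apply/and3P; split).
  - rewrite map_inj_in_uniq //; move=> X Y Xs Ys; apply: setU1_inj_in; by [apply: nT1 | apply: nT1].
  - by apply/hasPn => F /dis12.
  - by rewrite map_inj_uniq ?L2uniq //; apply: fv_inj2.
  - by apply/hasPn => F /dis3.
  - rewrite map_inj_in_uniq //; move=> X Y Xs Ys; apply: setU1_inj_in; by [apply: nT3 | apply: nT3].
apply: shell_ok_cat.
- apply: shell_ok_cat.
  + by apply: shell_ok_map.
  + exact: dis12.
  + move=> F G FT2; case/T2P: FT2 => A AL -> hG.
    have [a aA aG] : exists2 a, a \in A & inl a \notin G.
      case: hG => [GT1 | [GT2 lt]].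
      * case/T1P: GT1 => [[B x] vq ->].
        have : ~~ (A \subset B).
          apply/negP => AB; move: vq => /and5P[_ _ _ BD _]; rewrite inE in BD.
          move: AL; rewrite L2mem => /and3P[_ _ /negP]; apply.
          by apply: dD BD; apply: setUS.
        case/subsetPn => a aA aB; exists a => //; fvsimp.
        by rewrite (negPf aB) orbF; apply: contraTneq aA => ->; apply: L2e.
      * case/T2P: GT2 lt => A' AL' ->; rewrite !iT2 => lt.
        have : ~~ (A \subset A').
          apply/negP => AA'.
          have eAA : A == A' by rewrite eqEcard AA' (L2card AL' AL (ltnW lt)).
          by move: lt; rewrite (eqP eAA) ltnn.
        by case/subsetPn => a aA aA'; exists a => //; rewrite fv_inl.
    have [H [hH sH]] := IIstep A a AL aA.
    exists (inl a); split; first by rewrite fv_inl.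
      by apply: notG => //; rewrite fv_inl.
    by exists H.
- exact: dis3.
- move=> F G FT3 hG.
  case: hG => [GT12 | [GT3 lt]]; last first.
    have [v [vF sub [H [HT3 Hlt sH]]]] := oT3 F G FT3 GT3 lt.
    by exists v; split => //; exists H; split => //; right.
  case/T3P: FT3 => [[B x] vq ->].
  move: (vq) => /and5P[/= BS xS xB BD xBD].
  exists (inr e); split.
  + by rewrite in_setU1 eqxx.
  + by apply: notG => //; [rewrite in_setU1 eqxx | apply: noreT12].
  + case eBD : (e |: B \in D).
      exists (inl e |: fv S' (B, x)); split.
        left; rewrite mem_cat; apply/orP; left; apply: map_f; apply: map_f.
        rewrite m1; apply/and5P; split => //=; rewrite inE //.
        apply/negP=> h; move/negP: xBD; apply; apply: dD h; apply: subsetUr.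
      apply/subsetP=> z; rewrite !in_setD1 !in_setU1; case: (z == inr e) => /=; first done.
      by move=> ->; rewrite orbT.
    exists (fv S (B, e)); split.
      left; rewrite mem_cat; apply/orP; right; apply: map_f.
      by rewrite L2mem BS BD eBD.
    apply/subsetP => [[z|z]]; fvsimp => //.
    case: (eqVneq z e) => [->|ze]; first by [].
    rewrite /S' !inE /= (negPf ze) /=.
    by case/andP => ->; rewrite negb_or => /andP[_ ->].
Qed.


Lemma main_rec k : forall S D, #|S| <= k -> dc D ->
  exists s, [/\ forall p, (p \in s) = valid S D p, uniq (map (fv S) s)
              & shell_ok (map (fv S) s)].
Proof.
elim: k => [|k IH] S D hS dD; case: (set_0Vmem S) => [S0 | [e eS]].
- exists [::]; split => //; first by move=> p; rewrite /valid S0 inE andbF.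
- by move: hS; rewrite (cardsD1 e S) eS.
- exists [::]; split => //; first by move=> p; rewrite /valid S0 inE andbF.
have hS' : #|S :\ e| <= k by move: hS; rewrite (cardsD1 e S) eS.
have [s1 [m1 u1 o1]] := IH (S :\ e) (D1 D e) hS' (@dcU D e dD).
have [s0 [m0 u0 o0]] := IH (S :\ e) D hS' dD.
have [ut ot] := step_shell dD eS m1 u1 o1 m0 u0 o0.
exists (map (fun q => (e |: q.1, q.2)) s1 ++ map (fun A => (A, e)) (L2 S D e) ++ s0).
split => //; move=> p; exact: step_mem.
Qed.


Lemma card_fv S D p : valid S D p -> #|fv S p| = #|S|.-1.
Proof.
case: p => A x /and5P[/= AS xS xA _ _].
set X := S :\: (x |: A).
have I0 : inl @: A :&: inr @: X = set0 :> {set I + I}.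
  apply/setP => [[z|z]]; rewrite !inE; apply/andP => [[/imsetP[y1 _ e1] /imsetP[y2 _ e2]]].
    by [].
  by [].
rewrite /fv /= cardsU -/X I0 cards0 subn0 (card_imset _ inl_inj) (card_imset _ inr_inj).
have sub : x |: A \subset S by rewrite subUset sub1set xS.
rewrite /X (cardsDS sub) cardsU1 xA.
have := subset_leq_card sub; rewrite cardsU1 xA /=; move: #|A| #|S| => a b; lia.
Qed.


Lemma bf_fv A x : bier_face A (x |: A) = fv setT (A, x).
Proof. by rewrite /bier_face /fv /= setTD. Qed.

Lemma proper_U1 A x : x \notin A -> A \proper x |: A.
Proof.
move=> xA; apply/properP; split; first exact: subsetUr.
by exists x; rewrite ?in_setU1 ?eqxx.
Qed.

Lemma fv_in_Bier D p : valid setT D p -> fv setT p \in Bier D.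
Proof.
case: p => A x /and5P[/= _ _ xA AD xAD].
rewrite -bf_fv; apply/imsetP; exists (A, x |: A) => //.
by rewrite inE /= proper_U1 // AD xAD.
Qed.

Lemma face_sub D B C : dc D -> B \proper C -> B \in D -> C \notin D ->
  exists2 p, valid setT D p & bier_face B C \subset fv setT p.
Proof.
move=> dD BC BD CD.
pose P := [pred A : {set I} | [&& B \subset A, A \proper C & A \in D]].
have PB : P B by rewrite /P /= subxx BC BD.
case: (arg_maxnP (fun A : {set I} => #|A|) PB) => A /and3P[BA AC AD] Amax.
case/properP: (AC) => AC' [x xC xA].
have xAC : x |: A \subset C by rewrite subUset sub1set xC AC'.
have xAD : x |: A \notin D.
  apply/negP => xAD.
  case: (eqVneq (x |: A) C) => [eqC|neC]; first by move: CD; rewrite -eqC xAD.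
  have : P (x |: A).
    rewrite /P /= xAD andbT; apply/andP; split.
      by apply: subset_trans BA (subsetUr _ _).
    by rewrite properEneq neC xAC.
  move/Amax; rewrite cardsU1 xA /=; lia.
exists (A, x); first by apply/and5P; split => //=; rewrite ?subsetT ?inE.
apply/subsetP => [[z|z]]; rewrite /bier_face in_setU ?fv_inl ?fv_inr /=.
  rewrite mem_imset; last exact: inl_inj.
  have -> : (inl z \in [set inr x | x in ~: C]) = false.
    by apply/imsetP => [[y _ e]].
  by rewrite orbF => /(subsetP BA).
rewrite mem_imset; last exact: inr_inj.
have -> : (inr z \in [set inl x | x in B]) = false.
  by apply/imsetP => [[y _ e]].
rewrite inE /= => zC; rewrite inE; apply: contra zC; apply: (subsetP xAC).
Qed.

End Bier.

Unset Implicit Arguments.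

Theorem theorem7 (n : nat) (D : {set {set 'I_n}}) :
  2 <= n -> proper_ideal D ->
  (forall F, facet (Bier D) F -> #|F| = n.-1) /\ shellable (Bier D).
Proof.
move=> n2 [D0 dD TD].
have dcD : dc D by move=> A B; apply: dD.
have [s [ms us os]] := main_rec (leqnn #|[set: 'I_n]|) dcD.
set fs := map (fv setT) s.
have cardT : #|[set: 'I_n]| = n by rewrite cardsT card_ord.
have facetE : forall F, facet (Bier D) F <-> F \in fs.
  move=> F; split.
  - case=> FB Fmax; case/imsetP: FB => [[B C]]; rewrite inE /= => /and3P[BC BD CD] eF; subst F.
    have [p vp sub] := face_sub dcD BC BD CD.
    have eq := Fmax _ (fv_in_Bier vp) sub.
    by rewrite -eq; apply: map_f; rewrite ms.
  - case/mapP => p ps ->; have vp : valid setT D p by rewrite -ms.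
    split; first exact: fv_in_Bier.
    move=> G GB sub; case/imsetP: (GB) => [[B C]]; rewrite inE /= => /and3P[BC BD CD] eG.
    have [q vq sub'] := face_sub dcD BC BD CD; rewrite -eG in sub'.
    apply/esym/eqP; rewrite eqEcard sub (card_fv vp) -(card_fv vq) /=.
    exact: subset_leq_card.
have cardF : forall F, F \in fs -> #|F| = n.-1.
  by move=> F /mapP[p ps ->]; rewrite (card_fv (D := D)) ?cardT // -ms.
split; first by move=> F /facetE; exact: cardF.
split; first by exists n.-1 => F /facetE; exact: cardF.
exists fs; first by split => // F; split => [/facetE|/facetE].
move=> k /andP[_ kn]; exact: (shell_ok_pure us cardF os kn).
Qed.
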